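(* Let $(\mathsf{C},\otimes,I)$ be an additive symmetric monoidal category and $A$ an object. For all $n\ge1$ and $0\le k\le n-1$, $\mathsf{unsh}(n+1,k+1)_A=\mathsf{unsh}(n,k+1)_A\otimes 1_A+\mathsf{unsh}(n,k)_A\otimes 1_A;1_{A^{\otimes k}}\otimes\gamma_{A^{\otimes(n-k)},A}$ as morphisms $A^{\otimes(n+1)}\to A^{\otimes(n+1)}$.
   Context: Composition is written $f;g$ (first $f$ then $g$); the monoidal structure is treated as strict, $\gamma$ is the symmetry. An additive symmetric monoidal category is a symmetric monoidal category whose hom-sets are commutative monoids with composition and $\otimes$ preserving $0$ and $+$ in each argument. For $\sigma\in S_n$, $\overline{\sigma}_{A,\dots,A}\colon A^{\otimes n}\to A^{\otimes n}$ is the canonical symmetry isomorphism moving the $i$-th factor to position $\sigma(i)$ (identity for $n\le1$). A $(k,l)$-unshuffle is a permutation $\sigma\in S_{k+l}$ with $\sigma^{-1}(1)<\dots<\sigma^{-1}(k)$ and $\sigma^{-1}(k+1)<\dots<\sigma^{-1}(k+l)$; $\mathsf{Unsh}(n,k)$ is the set of $(k,n-k)$-unshuffles and $\mathsf{unsh}(n,k)_A:=\sum_{\sigma\in\mathsf{Unsh}(n,k)}\overline{\sigma}_{A,\dots,A}$. *)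

(* Defs.v *)
From HB Require Import structures.
From mathcomp Require Import all_boot all_order all_algebra all_fingroup.
Set Implicit Arguments. Unset Strict Implicit. Unset Printing Implicit Defensive.
Import GRing.Theory.
Local Open Scope ring_scope.

(* transport of a morphism along equalities of objects
   (needed because strictness is a propositional equality of objects) *)
Definition castH {O : Type} (H : O -> O -> Type) {X X' Y Y' : O}
  (e1 : X = X') (e2 : Y = Y') (f : H X Y) : H X' Y' :=
  match e1 in _ = X1, e2 in _ = Y1 return H X1 Y1 with erefl, erefl => f end.
Arguments castH {O} H {X X' Y Y'} e1 e2 f.

(* Composition [cmp f g] is "f ; g" (first f then g). *)
Record ASMCdata := {
  Ob : Type;
  Mor : Ob -> Ob -> nmodType;
  cmp : forall X Y Z, Mor X Y -> Mor Y Z -> Mor X Z;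
  idmor : forall X, Mor X X;
  tens : Ob -> Ob -> Ob;
  Iob : Ob;
  tensm : forall X X' Y Y', Mor X X' -> Mor Y Y' -> Mor (tens X Y) (tens X' Y');
  gam : forall X Y, Mor (tens X Y) (tens Y X);
}.

Arguments cmp {_ _ _ _}. Arguments idmor {_}. Arguments tens {_}.
Arguments Iob {_}. Arguments tensm {_ _ _ _ _}. Arguments gam {_}.
Arguments Mor : clear implicits.

Record is_ASMC (C : ASMCdata) : Prop := {
  comp_idl : forall (X Y : Ob C) (f : Mor C X Y), cmp (idmor X) f = f;
  comp_idr : forall (X Y : Ob C) (f : Mor C X Y), cmp f (idmor Y) = f;
  compA : forall (X Y Z W : Ob C) (f : Mor C X Y) (g : Mor C Y Z) (h : Mor C Z W),
      cmp f (cmp g h) = cmp (cmp f g) h;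
  tensm_id : forall (X Y : Ob C), tensm (idmor X) (idmor Y) = idmor (tens X Y);
  tensm_comp : forall (X X' X'' Y Y' Y'' : Ob C) (f : Mor C X X') (f' : Mor C X' X'')
      (g : Mor C Y Y') (g' : Mor C Y' Y''),
      tensm (cmp f f') (cmp g g') = cmp (tensm f g) (tensm f' g');
  tensA : forall (X Y Z : Ob C), tens (tens X Y) Z = tens X (tens Y Z);
  tens1l : forall (X : Ob C), tens Iob X = X;
  tens1r : forall (X : Ob C), tens X Iob = X;
  tensmA : forall (X X' Y Y' Z Z' : Ob C) (f : Mor C X X') (g : Mor C Y Y') (h : Mor C Z Z'),
      castH (fun P Q => Mor C P Q : Type) (tensA X Y Z) (tensA X' Y' Z')
        (tensm (tensm f g) h) = tensm f (tensm g h);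
  tensm1l : forall (X X' : Ob C) (f : Mor C X X'),
      castH (fun P Q => Mor C P Q : Type) (tens1l X) (tens1l X')
        (tensm (idmor Iob) f) = f;
  tensm1r : forall (X X' : Ob C) (f : Mor C X X'),
      castH (fun P Q => Mor C P Q : Type) (tens1r X) (tens1r X')
        (tensm f (idmor Iob)) = f;
  sym_nat : forall (X X' Y Y' : Ob C) (f : Mor C X X') (g : Mor C Y Y'),
      cmp (tensm f g) (gam X' Y') = cmp (gam X Y) (tensm g f);
  sym_inv : forall (X Y : Ob C), cmp (gam X Y) (gam Y X) = idmor (tens X Y);
  hexagon1 : forall (X Y Z : Ob C),
      gam X (tens Y Z) =
      castH (fun P Q => Mor C P Q : Type) erefl (esym (tensA Y Z X))
        (cmp (castH (fun P Q => Mor C P Q : Type) (tensA X Y Z) (tensA Y X Z)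
                 (tensm (gam X Y) (idmor Z)))
              (tensm (idmor Y) (gam X Z)));
  hexagon2 : forall (X Y Z : Ob C),
      gam (tens X Y) Z =
      castH (fun P Q => Mor C P Q : Type) erefl (tensA Z X Y)
        (cmp (castH (fun P Q => Mor C P Q : Type)
                 (esym (tensA X Y Z)) (esym (tensA X Z Y))
                 (tensm (idmor X) (gam Y Z)))
              (tensm (gam X Z) (idmor Y)));
  comp0l : forall (X Y Z : Ob C) (g : Mor C Y Z), cmp (0 : Mor C X Y) g = 0;
  comp0r : forall (X Y Z : Ob C) (f : Mor C X Y), cmp f (0 : Mor C Y Z) = 0;
  compDl : forall (X Y Z : Ob C) (f f' : Mor C X Y) (g : Mor C Y Z),
      cmp (f + f') g = cmp f g + cmp f' g;
  compDr : forall (X Y Z : Ob C) (f : Mor C X Y) (g g' : Mor C Y Z),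
      cmp f (g + g') = cmp f g + cmp f g';
  tensm0l : forall (X X' Y Y' : Ob C) (g : Mor C Y Y'), tensm (0 : Mor C X X') g = 0;
  tensm0r : forall (X X' Y Y' : Ob C) (f : Mor C X X'), tensm f (0 : Mor C Y Y') = 0;
  tensmDl : forall (X X' Y Y' : Ob C) (f f' : Mor C X X') (g : Mor C Y Y'),
      tensm (f + f') g = tensm f g + tensm f' g;
  tensmDr : forall (X X' Y Y' : Ob C) (f : Mor C X X') (g g' : Mor C Y Y'),
      tensm f (g + g') = tensm f g + tensm f g'
}.

Record ASMC := { asmc_data :> ASMCdata; asmc_ax : is_ASMC asmc_data }.

Section Powers.
Variables (C : ASMC) (A : Ob C).

Let tA := tensA (asmc_ax C).
Let t1r := tens1r (asmc_ax C).

(* A^{(x)n} = (...((I (x) A) (x) A)...) (x) A ; by strictness this is A (x) ... (x) A *)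
Fixpoint pw (n : nat) : Ob C :=
  match n with 0 => Iob | m.+1 => tens (pw m) A end.

Lemma pw_add a b : tens (pw a) (pw b) = pw (a + b)%N.
Proof.
elim: b => [|b IH] /=; first by rewrite addn0 t1r.
by rewrite -tA IH addnS.
Qed.

(* cast between tensor powers along an equality of exponents (0 if unequal) *)
Definition castN (a b a' b' : nat) (f : Mor C (pw a) (pw a')) : Mor C (pw b) (pw b') :=
  match a =P b, a' =P b' with
  | ReflectT e1, ReflectT e2 =>
      castH (fun P Q => Mor C P Q : Type) (f_equal pw e1) (f_equal pw e2) f
  | _, _ => 0
  end.


Definition shiftl (k m : nat) : Mor C (pw (k + m.+1)%N) (pw (k.+1 + m)%N) :=
  castH (fun P Q => Mor C P Q : Type) (pw_add k m.+1)
    (eq_trans (esym (tA (pw k) A (pw m))) (pw_add k.+1 m))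
    (tensm (idmor (pw k)) (gam (pw m) A)).

(* 1_{A^{(x)k}} (x) gamma_{A^{(x)(n-k)}, A} : A^{(x)(n+1)} -> A^{(x)(n+1)}
   (meaningful for k <= n) *)
Definition id_tens_sym (n k : nat) : Mor C (pw n.+1) (pw n.+1) :=
  @castN (k + (n - k).+1)%N n.+1 (k.+1 + (n - k))%N n.+1 (shiftl k (n - k)).

(* restriction of sigma in S_{n+1} to the first n factors:
   tau i = unbump (sigma n) (sigma i) *)
Definition restr_fun n (s : 'S_n.+1) (i : 'I_n) : 'I_n :=
  odflt i (unlift (s ord_max) (s (lift ord_max i))).

Lemma restr_fun_some n (s : 'S_n.+1) i :
  unlift (s ord_max) (s (lift ord_max i)) = Some (restr_fun s i).
Proof.
rewrite /restr_fun; case: unliftP => [j _|] //=.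
by move/perm_inj/eqP; rewrite eq_sym (negbTE (neq_lift _ _)).
Qed.

Lemma unlift_eq n (h y : 'I_n) x : unlift h y = Some x -> y = lift h x.
Proof. by case: unliftP => [j -> [<-]|]. Qed.

Lemma restr_fun_inj n (s : 'S_n.+1) : injective (restr_fun s).
Proof.
move=> i1 i2 H.
have E1 := unlift_eq (restr_fun_some s i1).
have E2 := unlift_eq (restr_fun_some s i2).
by move: E1; rewrite H -E2 => /perm_inj /lift_inj.
Qed.

Definition restr n (s : 'S_n.+1) : 'S_n := perm (@restr_fun_inj n s).

(* the canonical symmetry  \overline{sigma} : A^{(x)n} -> A^{(x)n},
   moving the i-th factor to position sigma(i) (0-based indices);
   built recursively: first permute the first n factors by the restriction
   of sigma, then move the last factor to position sigma(n). *)
Fixpoint symperm (n : nat) : 'S_n -> Mor C (pw n) (pw n) :=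
  match n with
  | 0 => fun _ => idmor (pw 0)
  | m.+1 => fun s =>
      cmp (tensm (symperm (restr s)) (idmor A)) (id_tens_sym m (s ord_max))
  end.

(* (k, n-k)-unshuffles (0-based): sigma^{-1} increasing on [0,k) and on [k,n) *)
Definition is_unsh (n k : nat) (s : 'S_n) : bool :=
  [forall i : 'I_n, forall j : 'I_n,
     ((i < j)%N && ((j < k)%N || (k <= i)%N)) ==> ((s^-1)%g i < (s^-1)%g j)%N].

Definition unsh (n k : nat) : Mor C (pw n) (pw n) :=
  \sum_(s : 'S_n | is_unsh k s) symperm s.

End Powers.

(* Main.v *)
Require Import Defs.
From HB Require Import structures.
From mathcomp Require Import all_boot all_order all_algebra all_fingroup.
From Stdlib Require Import ProofIrrelevance.
Set Implicit Arguments. Unset Strict Implicit. Unset Printing Implicit Defensive.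
Import GRing.Theory.
Local Open Scope ring_scope.

Section Casts.
Variable C : ASMC.
Let ax := asmc_ax C.
Notation MC := (fun P Q : Ob C => Mor C P Q : Type).

Definition heq {X Y X' Y' : Ob C} (f : Mor C X Y) (g : Mor C X' Y') : Prop :=
  exists (e1 : X = X') (e2 : Y = Y'), castH MC e1 e2 f = g.

Lemma heq_refl X Y (f : Mor C X Y) : heq f f.
Proof. by exists erefl, erefl. Qed.

Lemma heq_sym X Y X' Y' (f : Mor C X Y) (g : Mor C X' Y') : heq f g -> heq g f.
Proof.
case=> e1 [e2 Hg]; subst g; case: X' / e1; case: Y' / e2; exact: heq_refl.
Qed.

Lemma heq_trans X Y X' Y' X'' Y'' (f : Mor C X Y) (g : Mor C X' Y') (h : Mor C X'' Y'') :
  heq f g -> heq g h -> heq f h.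
Proof.
case=> e1 [e2 Hg]; subst g; case: X' / e1; case: Y' / e2.
case=> e1 [e2 Hh]; subst h; case: X'' / e1; case: Y'' / e2; exact: heq_refl.
Qed.

Lemma heq_eq X Y (f g : Mor C X Y) : heq f g -> f = g.
Proof.
case=> e1 [e2 <-].
by rewrite (proof_irrelevance _ e1 erefl) (proof_irrelevance _ e2 erefl).
Qed.

Lemma heq_cast X Y X' Y' (e1 : X = X') (e2 : Y = Y') (f : Mor C X Y) :
  heq (castH MC e1 e2 f) f.
Proof. apply: heq_sym; by exists e1, e2. Qed.

Lemma heq_castr X Y X' Y' (e1 : X = X') (e2 : Y = Y') (f : Mor C X Y) :
  heq f (castH MC e1 e2 f).
Proof. by exists e1, e2. Qed.

Lemma heq_cmp X Y Z X' Y' Z' (f : Mor C X Y) (g : Mor C Y Z)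
  (f' : Mor C X' Y') (g' : Mor C Y' Z') :
  heq f f' -> heq g g' -> heq (cmp f g) (cmp f' g').
Proof.
case=> e1 [e2 Hf]; subst f'; move: g'; case: X' / e1; case: Y' / e2 => g'.
case=> e1 [e2 Hg]; subst g'; case: Z' / e2.
rewrite (proof_irrelevance _ e1 erefl); exact: heq_refl.
Qed.

Lemma heq_tensm X X' Y Y' X1 X1' Y1 Y1' (f : Mor C X X') (g : Mor C Y Y')
  (f1 : Mor C X1 X1') (g1 : Mor C Y1 Y1') :
  heq f f1 -> heq g g1 -> heq (tensm f g) (tensm f1 g1).
Proof.
case=> e1 [e2 Hf]; subst f1; case: X1 / e1; case: X1' / e2.
case=> e1 [e2 Hg]; subst g1; case: Y1 / e1; case: Y1' / e2.
exact: heq_refl.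
Qed.

Lemma heq_id X X' : X = X' -> heq (idmor X) (idmor X').
Proof. move=> ->; exact: heq_refl. Qed.

Lemma heq_gam X X' Y Y' : X = X' -> Y = Y' -> heq (gam X Y) (gam X' Y').
Proof. move=> -> ->; exact: heq_refl. Qed.

Lemma heq_tens1l X X' (f : Mor C X X') : heq (tensm (idmor Iob) f) f.
Proof. by exists (tens1l ax X), (tens1l ax X'); rewrite (tensm1l ax). Qed.

Lemma heq_tens1r X X' (f : Mor C X X') : heq (tensm f (idmor Iob)) f.
Proof. by exists (tens1r ax X), (tens1r ax X'); rewrite (tensm1r ax). Qed.

Variable A : Ob C.
Definition phi : Mor C A A := castH MC (tens1l ax A) (tens1r ax A) (gam Iob A).
Definition psi : Mor C A A := castH MC (tens1r ax A) (tens1l ax A) (gam A Iob).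

Lemma phi_idem : phi = cmp phi phi.
Proof.
apply: heq_eq.
have H := hexagon2 ax Iob Iob A.
have E : heq (gam (tens Iob Iob) A) phi.
  apply: heq_trans (heq_castr _ _ _).
  by apply: heq_gam; rewrite ?(tens1l ax).
apply: heq_trans (heq_sym E) _.
rewrite H.
apply: heq_trans (heq_cast _ _ _) _.
apply: heq_cmp.
  apply: heq_trans (heq_cast _ _ _) _.
  apply: heq_trans (heq_tens1l _) _.
  exact: heq_castr.
apply: heq_trans (heq_tens1r _) _.
exact: heq_castr.
Qed.

Lemma phi_psi : cmp phi psi = idmor A.
Proof.
apply: heq_eq.
apply: heq_trans (_ : heq _ (cmp (gam Iob A) (gam A Iob))) _.
  apply: heq_cmp; exact: heq_cast.
rewrite (sym_inv ax); apply: heq_id; exact: tens1l.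
Qed.

Lemma phi_id : phi = idmor A.
Proof.
have H := Defs.compA ax phi phi psi.
by rewrite -phi_psi {2}phi_idem -H phi_psi (comp_idr ax).
Qed.

Lemma heq_gamI : heq (gam Iob A) (idmor A).
Proof. rewrite -phi_id; exact: heq_castr. Qed.

End Casts.

Section Main.
Variable C : ASMC.
Let ax := asmc_ax C.
Variable A : Ob C.

Lemma castN_heq a b a' b' (f : Mor C (pw A a) (pw A a')) :
  a = b -> a' = b' -> heq (@castN C A a b a' b' f) f.
Proof.
move=> e e'; rewrite /castN.
case: eqP => [e1|]; last by [].
case: eqP => [e2|]; last by [].
exact: heq_cast.
Qed.

Lemma id_tens_sym_nn n : id_tens_sym A n n = idmor (pw A n.+1).
Proof.
apply: heq_eq; rewrite /id_tens_sym.
apply: heq_trans (castN_heq _ _ _) _.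
- by rewrite subnn addn1.
- by rewrite subnn addn0.
rewrite subnn /shiftl.
apply: heq_trans (heq_cast _ _ _) _.
rewrite -(tensm_id ax).
apply: heq_tensm; first exact: heq_refl.
exact: heq_gamI.
Qed.
End Main.

From mathcomp Require Import zify.

Lemma is_unshP n k (s : 'S_n) :
  reflect (forall i j : 'I_n, (i < j)%N -> (j < k)%N || (k <= i)%N -> ((s^-1)%g i < (s^-1)%g j)%N)
          (is_unsh k s).
Proof.
apply: (iffP forallP) => H.
  move=> i j lt c; move/forallP: (H i) => /(_ j) /implyP; apply; by rewrite lt c.
move=> i; apply/forallP => j; apply/implyP => /andP [lt c]; exact: H.
Qed.

Lemma val_lift n (j : 'I_n.+1) (q : 'I_n) : val (lift j q) = ((j <= q) + q)%N.
Proof. by []. Qed.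

Lemma is_unsh_lift n k (t : 'S_n) (j : 'I_n.+1) : (k < n)%N ->
  is_unsh k.+1 (lift_perm ord_max j t) =
  ((j == ord_max) && is_unsh k.+1 t) || ((j == k :> nat) && is_unsh k t).
Proof.
move=> kn.
have sV : ((lift_perm ord_max j t)^-1 = lift_perm j ord_max t^-1)%g by rewrite lift_permV.
have uj : val ((lift_perm ord_max j t)^-1 j)%g = n by rewrite sV lift_perm_id.
have ul : forall q, val ((lift_perm ord_max j t)^-1 (lift j q))%g = val ((t^-1)%g q).
  by move=> q; rewrite sV lift_perm_lift; exact: lift_max.
apply/idP/idP.
- move/is_unshP => H.
  have jk : (j == ord_max) || (j == k :> nat).
    apply/negPn/negP; rewrite negb_or => /andP [jn jk].
    have jlt : (j.+1 < n.+1)%N.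
      have := ltn_ord j; move: jn; rewrite -(inj_eq val_inj) /= => jn; lia.
    have := H j (Ordinal jlt) (ltnSn j).
    rewrite uj /=.
    have := ltn_ord ((lift_perm ord_max j t)^-1 (Ordinal jlt))%g.
    move: jk; case: (ltngtP j k) => // c _ hh Hx;
      (suff: (n < (lift_perm ord_max j t)^-1%g (Ordinal jlt))%N by lia);
      apply: Hx; rewrite ?orbT ?orbF //; lia.
  case/orP: jk => [/eqP Ej | /eqP Ej].
    subst j; rewrite eqxx /=; apply/orP; left; apply/is_unshP => q1 q2 lt c.
    have := H (lift ord_max q1) (lift ord_max q2).
    rewrite !ul !lift_max; apply => //; lia.
  have -> : (j == k :> nat) by rewrite Ej.
  apply/orP; right; apply/is_unshP => q1 q2 lt c.
  have := H (lift j q1) (lift j q2).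
  rewrite !ul !val_lift Ej; apply; case: leqP; case: leqP; lia.
- case/orP => /andP [/eqP Ej Ht]; move/is_unshP: Ht => Ht.
    subst j; apply/is_unshP => p1 p2 lt c.
    case: (unliftP ord_max p1) => [q1 E1|E1]; case: (unliftP ord_max p2) => [q2 E2|E2]; subst.
    + rewrite !ul; apply: Ht; rewrite ?lift_max //; move: lt c; rewrite !lift_max; lia.
    + rewrite uj ul; exact: ltn_ord.
    + exfalso; have Em : ((@ord_max n) : nat) = n by [].
      move: lt; rewrite val_lift; have := ltn_ord q2; case: leqP => //= ? ? ?; lia.
    + by rewrite ltnn in lt.
  apply/is_unshP => p1 p2 lt c.
  case: (unliftP j p1) => [q1 E1|E1]; case: (unliftP j p2) => [q2 E2|E2]; subst p1 p2.
  + rewrite !ul; apply: Ht; move: lt c; rewrite !val_lift Ej; case: leqP; case: leqP; lia.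
  + rewrite uj ul; exact: ltn_ord.
  + move: lt c; rewrite val_lift Ej; case: leqP; lia.
  + by rewrite ltnn in lt.
Qed.

Lemma restr_lift n (t : 'S_n) (j : 'I_n.+1) : restr (lift_perm ord_max j t) = t.
Proof.
apply/permP => i; rewrite permE /restr_fun lift_perm_lift lift_perm_id.
by rewrite liftK.
Qed.

Lemma lift_restr n (s : 'S_n.+1) : lift_perm ord_max (s ord_max) (restr s) = s.
Proof.
apply/permP => i; case: (unliftP ord_max i) => [q ->|->]; last by rewrite lift_perm_id.
rewrite lift_perm_lift permE.
by rewrite -(unlift_eq (restr_fun_some s q)).
Qed.

Lemma symperm_lift (C : ASMC) (A : Ob C) n (t : 'S_n) (j : 'I_n.+1) :
  symperm A (lift_perm ord_max j t) =
  cmp (tensm (symperm A t) (idmor A)) (id_tens_sym A n j).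
Proof. by rewrite /= restr_lift lift_perm_id. Qed.

Unset Implicit Arguments.
Theorem proposition3p19 (C : ASMC) (A : Ob C) (n k : nat) :
  (1 <= n)%N -> (k <= n - 1)%N ->
  unsh A n.+1 k.+1 =
  tensm (unsh A n k.+1) (idmor A)
  + cmp (tensm (unsh A n k) (idmor A)) (id_tens_sym A n k).
Proof.
move=> n1 kn0.
have kn : (k < n)%N by lia.
have kn1 : (k < n.+1)%N by lia.
have ax := asmc_ax C.
rewrite /unsh.
rewrite (reindex (fun p : 'S_n * 'I_n.+1 => lift_perm ord_max p.2 p.1)) /=; last first.
  exists (fun s => (restr s, s ord_max)) => [[t j]|s] _ /=.
    by rewrite restr_lift lift_perm_id.
  exact: lift_restr.
under eq_bigr do rewrite restr_lift lift_perm_id.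
under eq_bigl do rewrite is_unsh_lift //.
rewrite (bigID (fun p => p.2 == ord_max)) /=.
have E1 : forall p : 'S_n * 'I_n.+1,
   (((p.2 == ord_max) && is_unsh k.+1 p.1) || ((p.2 == k :> nat) && is_unsh k p.1)) && (p.2 == ord_max)
   = is_unsh k.+1 p.1 && (p.2 == ord_max).
  move=> [t j] /=; case: eqP => [->|_]; last by rewrite !andbF.
  have -> : (((@ord_max n) : nat) == k) = false.
    by apply/negbTE; rewrite neq_ltn kn orbT.
  by rewrite /= !andbT orbF.
have E2 : forall p : 'S_n * 'I_n.+1,
   (((p.2 == ord_max) && is_unsh k.+1 p.1) || ((p.2 == k :> nat) && is_unsh k p.1)) && ~~ (p.2 == ord_max)
   = is_unsh k p.1 && (p.2 == Ordinal kn1).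
  move=> [t j] /=; case: (eqVneq j ord_max) => [->|jn] /=.
    rewrite andbF /=; apply/esym/negbTE; rewrite negb_and; apply/orP; right.
    by rewrite -(inj_eq val_inj) /= neq_ltn kn orbT.
  by rewrite andbT andbC -(inj_eq val_inj).
rewrite (eq_bigl _ _ E1) (eq_bigl _ _ E2).
rewrite -(pair_big_dep (fun t => is_unsh k.+1 t) (fun _ j => j == ord_max)
                (fun t j => cmp (tensm (symperm A t) (idmor A)) (id_tens_sym A n j))).
rewrite -(pair_big_dep (fun t => is_unsh k t) (fun _ j => j == Ordinal kn1)
                (fun t j => cmp (tensm (symperm A t) (idmor A)) (id_tens_sym A n j))).
under eq_bigr do rewrite big_pred1_eq.
under [X in _ + X]eq_bigr do rewrite big_pred1_eq.
have hD : forall X Y (f g : Mor C X Y), tensm (f + g) (idmor A) = tensm f (idmor A) + tensm g (idmor A).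
  by move=> X Y f g; rewrite (tensmDl ax).
have h0 : forall X Y, tensm (0 : Mor C X Y) (idmor A) = 0.
  by move=> X Y; rewrite (tensm0l ax).
have cD : forall X Y Z (g : Mor C Y Z) (f f' : Mor C X Y), cmp (f + f') g = cmp f g + cmp f' g.
  by move=> X Y Z g f f'; rewrite (compDl ax).
have c0 : forall X Y Z (g : Mor C Y Z), cmp (0 : Mor C X Y) g = 0.
  by move=> X Y Z g; rewrite (comp0l ax).
congr (_ + _).
  rewrite (big_morph (fun f => tensm f (idmor A)) (hD _ _) (h0 _ _)).
  apply: eq_bigr => t _.
  by rewrite [id_tens_sym A n _]id_tens_sym_nn (comp_idr ax).
rewrite (big_morph (fun f => tensm f (idmor A)) (hD _ _) (h0 _ _)).
rewrite (big_morph (fun f => cmp f (id_tens_sym A n k)) (cD _ _ _ _) (c0 _ _ _ _)).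
by apply: eq_bigr.
Qed.
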